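(* Suppose system $(\Sigma)$ has stochastic relative degree $r$ at $\bar x$ and that the row vectors $\frac{\partial h}{\partial x}(\bar x),\frac{\partial \mathcal S_{f,l}h}{\partial x}(\bar x),\dots,\frac{\partial \mathcal S^{r-1}_{f,l}h}{\partial x}(\bar x)$ are linearly independent. Set $\phi_i(x)=\mathcal S^{i-1}_{f,l}h(x)$ for $i=1,\dots,r$. If $r<n$, there exist smooth real-valued functions $\phi_{r+1},\dots,\phi_n$ such that the Jacobian of $\Phi(x)=[\phi_1(x),\dots,\phi_n(x)]^\top$ is invertible at $\bar x$, so that $\Phi$ is a coordinate transformation on a neighbourhood of $\bar x$. In the coordinates $z_t=\Phi(x_t)$ system $(\Sigma)$ reads $$\dot z_i=z_{i+1}\ (i=1,\dots,r-1),\quad \dot z_r=c(\xi_t,z_t)+b(\xi_t,z_t)u+a(z_t)u^2,$$ $$\dot z_j=p_j(\xi_t,z_t)+q_j(\xi_t,z_t)u+s_j(z_t)u^2\ (j=r+1,\dots,n),\quad y_t=z_1,$$ where $c(\xi,z)=\mathcal S^r_{f,l}h(\xi,\Phi^{-1}(z))$, $b(\xi,z)=\mathcal A_{l,m,g}\mathcal S^{r-1}_{f,l}h(\xi,\Phi^{-1}(z))$, $a(z)=\frac12H_{m,m}\mathcal S^{r-1}_{f,l}h(\Phi^{-1}(z))$, $p_j(\xi,z)=\mathcal S_{f,l}\phi_j(\xi,\Phi^{-1}(z))$, $q_j(\xi,z)=\mathcal A_{l,m,g}\phi_j(\xi,\Phi^{-1}(z))$, $s_j(z)=\frac12H_{m,m}\phi_j(\Phi^{-1}(z))$;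 in particular $c,b,p_j,q_j$ are affine in $\xi$.
   Context: System $(\Sigma)$: $dx_t=(f(x_t)+g(x_t)u)dt+(l(x_t)+m(x_t)u)d\mathcal W_t$, $y_t=h(x_t)$, Itô sense, $x_t\in\mathbb R^n$, $u,y_t\in\mathbb R$, all maps smooth, $\mathcal W_t$ scalar standard Brownian motion, unique solutions; equivalently $\dot x_t=f+gu+(l+mu)\xi_t$ with $\xi_t=\dot{\mathcal W}_t$ generalised white noise; derivatives computed by Itô's formula. Notation: $L_fh=\frac{\partial h}{\partial x}f$; $H_{f,g}h=g^\top\frac{\partial^2h}{\partial x^2}f$; $\mathcal S_{f,l}h(\xi,x)=L_fh(x)+L_lh(x)\xi+\frac12H_{l,l}h(x)$ (defined for any smooth $h$), iterates $\mathcal S^k_{f,l}h=\mathcal S_{f,l}\mathcal S^{k-1}_{f,l}h$ defined when $\mathcal S^{k-1}_{f,l}h$ does not depend on $\xi$, $\mathcal S^0_{f,l}h=h$; $\mathcal A_{l,m,g}h(\xi,x)=L_gh(x)+L_mh(x)\xi+H_{l,m}h(x)$. Stochastic relative degree $r$ at $\bar x$: (ND) $L_l\mathcal S^k_{f,l}h=0$ and $L_m\mathcal S^k_{f,l}h=0$ near $\bar x$ for $k\in\{0,\dots,r-2\}$; (CD) $L_g\mathcal S^k_{f,l}h+H_{l,m}\mathcal S^k_{f,l}h=0$, $L_m\mathcal S^k_{f,l}h=0$, $H_{m,m}\mathcal S^k_{f,l}h=0$ near $\bar x$ for $k\in\{0,\dots,r-2\}$; (RD) at $\bar x$, $L_g\mathcal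 S^{r-1}_{f,l}h+H_{l,m}\mathcal S^{r-1}_{f,l}h\ne0$ or $L_m\mathcal S^{r-1}_{f,l}h\ne0$ or $H_{m,m}\mathcal S^{r-1}_{f,l}h\ne0$. *)

(* Defs.v *)
From HB Require Import structures.
From mathcomp Require Import all_boot all_order all_algebra.
From mathcomp Require Import all_classical all_reals all_analysis.
Set Implicit Arguments. Unset Strict Implicit. Unset Printing Implicit Defensive.
Import Order.TTheory GRing.Theory Num.Theory.
Import numFieldNormedType.Exports.
Local Open Scope ring_scope.

Section StochDefs.
Variables (R : realType) (n : nat).
Local Notation V := 'rV[R]_n.

Fixpoint Ck (k : nat) (h : V -> R) : Prop :=
  match k with
  | 0 => continuous h
  | k'.+1 => (forall x, differentiable h x) /\
             (forall v : V, Ck k' (fun x => derive h x v))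
  end.
Definition smooth (h : V -> R) : Prop := forall k, Ck k h.
Definition smooth_vf (F : V -> V) : Prop :=
  forall i : 'I_n, smooth (fun x => F x ord0 i).

Definition Lie (F : V -> V) (h : V -> R) (x : V) : R := derive h x (F x).
Definition Hess (F G : V -> V) (h : V -> R) (x : V) : R :=
  derive (fun y => derive h y (F x)) x (G x).

Definition grad (h : V -> R) (x : V) : 'rV[R]_n :=
  \row_j derive h x (delta_mx 0 j).

Definition S (f l : V -> V) (h : V -> R) (xi : R) (x : V) : R :=
  Lie f h x + Lie l h x * xi + 2^-1 * Hess l l h x.
(* the xi-free part of S_{f,l} h; used to form the iterates S^k_{f,l} h,
   which are only defined when the previous iterate does not depend on xi *)
Definition Sdrift (f l : V -> V) (h : V -> R) : V -> R :=
  fun x => Lie f h x + 2^-1 * Hess l l h x.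
Definition Siter (f l : V -> V) (k : nat) (h : V -> R) : V -> R :=
  iter k (Sdrift f l) h.
Definition A (l m g : V -> V) (h : V -> R) (xi : R) (x : V) : R :=
  Lie g h x + Lie m h x * xi + Hess l m h x.

(* time derivative of h(x_t) along (Sigma) with input value u and noise value
   xi, computed by Ito's formula:
   d h(x) = [L_{f+gu} h + 1/2 H_{l+mu,l+mu} h] dt + L_{l+mu} h dW *)
Definition itoD (f g l m : V -> V) (h : V -> R) (u xi : R) (x : V) : R :=
  let F := fun y => f y + u *: g y in
  let G := fun y => l y + u *: m y in
  Lie F h x + Lie G h x * xi + 2^-1 * Hess G G h x.

Definition stoch_rel_deg (f g l m : V -> V) (h : V -> R) (r : nat) (xbar : V)
  : Prop :=
  (0 < r)%N /\
  (forall k : nat, (k.+2 <= r)%N ->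
     \forall x \near xbar,
       Lie l (Siter f l k h) x = 0 /\ Lie m (Siter f l k h) x = 0) /\
  (forall k : nat, (k.+2 <= r)%N ->
     \forall x \near xbar,
       Lie g (Siter f l k h) x + Hess l m (Siter f l k h) x = 0 /\
       Lie m (Siter f l k h) x = 0 /\
       Hess m m (Siter f l k h) x = 0) /\
  (Lie g (Siter f l r.-1 h) xbar + Hess l m (Siter f l r.-1 h) xbar != 0 \/
   Lie m (Siter f l r.-1 h) xbar != 0 \/
   Hess m m (Siter f l r.-1 h) xbar != 0).

End StochDefs.

(* Main.v *)
Require Import Defs.
From HB Require Import structures.
From mathcomp Require Import all_boot all_order all_algebra.
From mathcomp Require Import all_classical all_reals all_analysis.
From mathcomp Require Import ring lra.
Import Order.TTheory GRing.Theory Num.Theory.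
Import numFieldNormedType.Exports.
Local Open Scope ring_scope.

Lemma near_forall_lt {T : Type} (F : set_system T) (FF : Filter F) (P : nat -> T -> Prop) N :
  (forall k, (k < N)%N -> F (P k)) -> F (fun x => forall k, (k < N)%N -> P k x).
Proof.
elim: N => [|N IH] H.
  have T0 : F setT := @filterT _ _ FF.
  apply: (@filterS _ _ FF _ _ _ T0) => x _ k; by rewrite ltn0.
have H1 := IH (fun k lt => H k (ltnW lt)).
apply: (@filterS2 _ _ FF _ _ _ _ H1 (H N (ltnSn N))) => x A B k.
rewrite ltnS leq_eqVlt => /orP[/eqP -> //|lt]; exact: A.
Qed.


Lemma complete_unit (F : fieldType) (r n : nat) (M : 'M[F]_(r, n)) (N : 'M[F]_n) :
  row_free M ->
  (forall (i : 'I_n) (H : (i < r)%N), row i N = row (Ordinal H) M) ->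
  (forall i : 'I_n, (r <= i)%N -> row i N = row i (M^C)%MS) -> N \in unitmx.
Proof.
move=> fM H1 H2.
rewrite -row_full_unit -sub1mx.
have := addsmx_compl_full M; rewrite -sub1mx => S1.
apply: (submx_trans S1); rewrite addsmx_sub; apply/andP; split.
  apply/row_subP => i.
  have ltin : (i < n)%N.
    by have := rank_leq_col M; move: fM => /eqP ->; apply: leq_trans.
  have -> : row i M = row (Ordinal ltin) N by rewrite (H1 (Ordinal ltin) (ltn_ord i)); congr row; apply: val_inj.
  exact: row_sub.
apply/row_subP => i.
case: (ltnP i r) => [lt|ge]; last by rewrite -H2 // row_sub.
have -> : row i (M^C)%MS = 0.
  rewrite /complmx row_mul; move: fM => /eqP ->.
  have -> : row i (copid_mx r : 'M[F]_n) = 0.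
    apply/rowP => j; rewrite !mxE.
    by rewrite lt andbT subrr.
  by rewrite mul0mx.
exact: sub0mx.
Qed.


Section S.
Context {R : realType} {n : nat}.
Local Notation V := 'rV[R]_n.

Lemma Ck_cont k (h : V -> R) : Ck k h -> continuous h.
Proof.
case: k => [//|k] [dh _] x; exact: differentiable_continuous.
Qed.

Lemma Ck_S k (h : V -> R) : Ck k.+1 h -> Ck k h.
Proof.
elim: k h => [|k IH] h; first by move=> H; exact: (@Ck_cont 1 h H).
by move=> [dh H]; split => // v; apply: IH; apply: H.
Qed.

Lemma Ck_ext (h1 : V -> R) k (h2 : V -> R) : (forall x, h1 x = h2 x) -> Ck k h1 -> Ck k h2.
Proof. by move=> e; have -> : h1 = h2 by apply: funext. Qed.

Lemma Ck_cst k (c : R) : Ck k (fun _ : V => c).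
Proof.
elim: k c => [|k IH] c /=; first exact: cst_continuous.
split => [x|v]; first exact: differentiable_cst.
apply: (Ck_ext (fun _ => 0)) => // x.
by rewrite (derive_cst c).
Qed.

Lemma Ck_add k (f g : V -> R) : Ck k f -> Ck k g -> Ck k (fun x => f x + g x).
Proof.
elim: k f g => [|k IH] f g /=.
  by move=> cf cg x; exact: (continuousD (cf x) (cg x)).
move=> [df Df] [dg Dg]; split => [x|v].
  exact: differentiableD.
apply: (Ck_ext (fun x => derive f x v + derive g x v)).
  by move=> x; rewrite (deriveD (f:=f) (g:=g)) //; apply: diff_derivable.
exact: IH.
Qed.

Lemma Ck_mul k (f g : V -> R) : Ck k f -> Ck k g -> Ck k (fun x => f x * g x).
Proof.
elim: k f g => [|k IH] f g /=.
  by move=> cf cg x; exact: (continuousM (cf x) (cg x)).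
move=> [df Df] [dg Dg]; split => [x|v].
  exact: differentiableM.
apply: (Ck_ext (fun x => f x * derive g x v + g x * derive f x v)).
  by move=> x; rewrite (deriveM (f:=f) (g:=g)) //; apply: diff_derivable.
apply: Ck_add; apply: IH => //; apply: Ck_S; split => //.
Qed.

Lemma Ck_sum k (I : Type) (s : seq I) (F : I -> V -> R) :
  (forall i, Ck k (F i)) -> Ck k (fun x => \sum_(i <- s) F i x).
Proof.
move=> H; elim: s => [|i s IH].
  by apply: (Ck_ext (fun _ => 0)) => [x|]; rewrite ?big_nil //; apply: Ck_cst.
apply: (Ck_ext (fun x => F i x + \sum_(j <- s) F j x)) => [x|].
  by rewrite big_cons.
exact: Ck_add.
Qed.

Lemma smooth_add (f g : V -> R) : smooth f -> smooth g -> smooth (fun x => f x + g x).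
Proof. by move=> a b k; apply: Ck_add. Qed.
Lemma smooth_mul (f g : V -> R) : smooth f -> smooth g -> smooth (fun x => f x * g x).
Proof. by move=> a b k; apply: Ck_mul. Qed.
Lemma smooth_cst (c : R) : smooth (fun _ : V => c).
Proof. by move=> k; apply: Ck_cst. Qed.
Lemma smooth_sum (I : Type) (s : seq I) (F : I -> V -> R) :
  (forall i, smooth (F i)) -> smooth (fun x => \sum_(i <- s) F i x).
Proof. by move=> H k; apply: Ck_sum => i; apply: H. Qed.
Lemma smooth_ext (h1 h2 : V -> R) : (forall x, h1 x = h2 x) -> smooth h1 -> smooth h2.
Proof. by move=> e H k; apply: (Ck_ext h1). Qed.
Lemma smooth_derive (h : V -> R) v : smooth h -> smooth (fun x => derive h x v).
Proof. by move=> H k; have [_ ] := H k.+1; apply. Qed.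
Lemma smooth_diff (h : V -> R) x : smooth h -> differentiable h x.
Proof. by move=> H; have [] := H 1%N. Qed.

Definition e (j : 'I_n) : V := delta_mx 0 j.

Lemma derive_lin (h : V -> R) x (v : V) : differentiable h x ->
  derive h x v = \sum_(j < n) v ord0 j * derive h x (e j).
Proof.
move=> dh; rewrite deriveE //.
rewrite {1}(row_sum_delta v) linear_sum; apply: eq_bigr => j _.
by rewrite linearZ /= deriveE.
Qed.

Lemma derive_lincomb (c : 'I_n -> R) (g : 'I_n -> V -> R) x w :
  (forall j, differentiable (g j) x) ->
  derive (fun y => \sum_(j < n) c j * g j y) x w = \sum_(j < n) c j * derive (g j) x w.
Proof.
move=> dg.
have -> : (fun y => \sum_(j < n) c j * g j y) = \sum_(j < n) (fun y => c j * g j y).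
  by rewrite fct_sumE.
rewrite derive_sum; last by move=> j; apply: diff_derivable; apply: differentiableM.
apply: eq_bigr => j _.
have -> : (fun y => c j * g j y) = (c j) \*o (g j) by [].
by rewrite deriveMl //; apply: diff_derivable.
Qed.

Lemma Lie_sum (F : V -> V) (h : V -> R) x : smooth h ->
  Lie F h x = \sum_(j < n) F x ord0 j * derive h x (e j).
Proof. by move=> sh; rewrite /Lie derive_lin //; apply: smooth_diff. Qed.

Lemma Lie_smooth (F : V -> V) (h : V -> R) : smooth_vf F -> smooth h -> smooth (Lie F h).
Proof.
move=> sF sh; apply: (smooth_ext (fun x => \sum_(j < n) F x ord0 j * derive h x (e j))).
  by move=> x; rewrite Lie_sum.
apply: smooth_sum => j; apply: smooth_mul; first exact: sF.
exact: smooth_derive.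
Qed.

Lemma Hess_sum (F G : V -> V) (h : V -> R) x : smooth h ->
  Hess F G h x = \sum_(j < n) F x ord0 j * Lie G (fun y => derive h y (e j)) x.
Proof.
move=> sh; rewrite /Hess.
have -> : (fun y => derive h y (F x)) = (fun y => \sum_(j < n) F x ord0 j * derive h y (e j)).
  by apply: funext => y; rewrite derive_lin //; apply: smooth_diff.
rewrite derive_lincomb //; move=> j; apply: smooth_diff; exact: smooth_derive.
Qed.

Lemma Hess_smooth (F G : V -> V) (h : V -> R) : smooth_vf F -> smooth_vf G -> smooth h ->
  smooth (Hess F G h).
Proof.
move=> sF sG sh.
apply: (smooth_ext (fun x => \sum_(j < n) F x ord0 j * Lie G (fun y => derive h y (e j)) x)).
  by move=> x; rewrite Hess_sum.
apply: smooth_sum => j; apply: smooth_mul; first exact: sF.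
by apply: Lie_smooth => //; apply: smooth_derive.
Qed.

Lemma Siter_smooth (f l : V -> V) (h : V -> R) k : smooth_vf f -> smooth_vf l -> smooth h ->
  smooth (Siter f l k h).
Proof.
move=> sf sl sh; elim: k => [//|k IH] /=.
rewrite /Sdrift; apply: smooth_add; first exact: Lie_smooth.
apply: smooth_mul; [exact: smooth_cst| exact: Hess_smooth].
Qed.

Lemma line_is_derive (g : V -> R) (p b : V) t : differentiable g (t *: b + p) ->
  is_derive t 1 (fun t : R => g (t *: b + p)) (derive g (t *: b + p) b).
Proof.
move=> dg.
have E : (fun k : R => k^-1 *: (((fun t : R => g (t *: b + p)) \o shift t) (k *: 1) - g (t *: b + p)))
   = (fun k : R => k^-1 *: ((g \o shift (t *: b + p)) (k *: b) - g (t *: b + p))).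
  apply: funext => k /=; congr (_ *: (g _ - _)).
  by rewrite scalerDl [k *: 1]mulr1 addrA.
have D : derivable (fun t : R => g (t *: b + p)) t 1.
  by rewrite /derivable E; apply: (diff_derivable (v := b)) dg.
apply: DeriveDef => //.
by rewrite /derive E.
Qed.

Lemma mvt_line (g : V -> R) (p b : V) s : 0 < s -> (forall y, differentiable g y) ->
  exists2 t, t \in `[0, s] & g (s *: b + p) - g p = s * derive g (t *: b + p) b.
Proof.
move=> s0 dg.
have C : {within `[0, s], continuous (fun t : R => g (t *: b + p))}%classic.
  apply: continuous_subspaceT => t.
  have := line_is_derive g p b t (dg _) => -[D _].
  exact: differentiable_continuous ((derivable1_diffP _ _).1 D).
have [c cin E] := @MVT_segment R (fun t : R => g (t *: b + p)) (fun t : R => derive g (t *: b + p) b) 0 s (ltW s0)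
  (fun t _ => line_is_derive g p b t (dg _)) C.
by exists c => //; move: E; rewrite scale0r add0r subr0 mulrC.
Qed.

Lemma diff_shiftc (h : V -> R) (c z : V) : differentiable h (z + c) ->
  differentiable (fun y => h (y + c)) z.
Proof.
move=> dh.
have dsh : differentiable (fun y : V => y + c) z.
  by apply: differentiableD => //; apply: differentiable_cst.
exact: (differentiable_comp dsh dh).
Qed.

Lemma derive_shiftc (h : V -> R) (c z v : V) :
  derive (fun y => h (y + c)) z v = derive h (z + c) v.
Proof.
have E : (fun k : R => k^-1 *: (((fun y => h (y + c)) \o shift z) (k *: v) - h (z + c)))
   = (fun k : R => k^-1 *: ((h \o shift (z + c)) (k *: v) - h (z + c))).
  by apply: funext => k /=; rewrite addrA.
by rewrite /derive E.
Qed.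

Lemma mvt2 (h : V -> R) (a b x : V) s : 0 < s -> smooth h ->
  exists sig, exists tau, sig \in `[0, s] /\ tau \in `[0, s] /\
   h (s *: b + x + s *: a) - h (s *: b + x) - (h (x + s *: a) - h x)
     = s * (s * derive (fun y => derive h y b) (sig *: a + (tau *: b + x)) a).
Proof.
move=> s0 sh.
have dh : forall y, differentiable h y by move=> y; apply: smooth_diff.
pose G := fun y => h (y + s *: a) - h y.
have dG : forall y, differentiable G y.
  by move=> y; apply: differentiableB => //; apply: diff_shiftc.
have [tau tin E1] := mvt_line G x b s s0 dG.
have dDb : forall y, differentiable (fun y => derive h y b) y.
  by move=> y; apply: smooth_diff; apply: smooth_derive.
have [sig sin E2] := mvt_line (fun y => derive h y b) (tau *: b + x) a s s0 dDb.
exists sig, tau; split => //; split => //.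
have -> : h (s *: b + x + s *: a) - h (s *: b + x) - (h (x + s *: a) - h x)
   = G (s *: b + x) - G x by [].
rewrite E1 -E2; congr (_ * _).
have -> : G = (fun y => h (y + s *: a)) - h by [].
rewrite deriveB; last 2 first.
- by apply: diff_derivable; apply: diff_shiftc.
- exact: diff_derivable.
by rewrite derive_shiftc [_ + s *: a]addrC.
Qed.

Lemma dist_bound (a b x : V) s sig tau : sig \in `[0, s] -> tau \in `[0, s] ->
  `|x - (sig *: a + (tau *: b + x))| <= s * (`|a| + `|b|).
Proof.
rewrite !in_itv /= => /andP[s1 s2] /andP[t1 t2].
have -> : x - (sig *: a + (tau *: b + x)) = - (sig *: a + tau *: b).
  by rewrite addrA opprD addrCA subrr addr0.
rewrite normrN (le_trans (ler_normD _ _)) // !normrZ !ger0_norm // mulrDr.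
by apply: lerD; apply: ler_wpM2r.
Qed.


Lemma alg1 (p q r t : R) : p - q - (r - t) = p - r - (q - t).
Proof. ring. Qed.
Lemma alg2 (d u v : R) : d <= u + v -> u < d / 2 -> v < d / 2 -> False.
Proof. move=> *; lra. Qed.

Lemma schwarz (h : V -> R) (a b x : V) : smooth h ->
  derive (fun y => derive h y b) x a = derive (fun y => derive h y a) x b.
Proof.
move=> sh.
pose F1 : V -> R := fun y => derive (fun y => derive h y b) y a.
pose F2 : V -> R := fun y => derive (fun y => derive h y a) y b.
have cF1 : continuous F1 := Ck_cont _ _ (smooth_derive _ a (smooth_derive _ b sh) 0).
have cF2 : continuous F2 := Ck_cont _ _ (smooth_derive _ b (smooth_derive _ a sh) 0).
change (F1 x = F2 x).
case: (eqVneq (F1 x) (F2 x)) => [E|ne]; first exact: E.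
pose d : R := `|F1 x - F2 x|.
have d0 : 0 < d by rewrite normr_gt0 subr_eq0.
have d20 : 0 < d / 2 by rewrite divr_gt0.
have N1 : \forall t \near x, `|F1 x - F1 t| < d / 2.
  exact: (cvgr_dist_lt _ _ (cF1 x) _ d20).
have N2 : \forall t \near x, `|F2 x - F2 t| < d / 2.
  exact: (cvgr_dist_lt _ _ (cF2 x) _ d20).
have N := @filterI _ (nbhs x) _ _ _ N1 N2.
have [eps eps0 Hb] := (nbhs_ballP _ _).1 (N _).
pose K := `|a| + `|b| + 1.
have K0 : 0 < K by rewrite /K ltr_wpDl // addr_ge0.
pose s := eps / K.
have s0 : 0 < s by rewrite divr_gt0.
have inb : forall sig tau, sig \in `[0, s] -> tau \in `[0, s] ->
    ball x eps (sig *: a + (tau *: b + x)).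
  move=> sig tau si ti; rewrite -ball_normE /ball_ /=.
  apply: (le_lt_trans (dist_bound a b x s sig tau si ti)).
  rewrite /s -(ltr_pM2r K0) mulrAC divfK ?gt_eqF // ltr_pM2l //.
  by rewrite /K ltrDl.
have [sig [tau [si [ti E1]]]] := mvt2 h a b x s s0 sh.
have [sig' [tau' [si' [ti' E2]]]] := mvt2 h b a x s s0 sh.
have [H1 _] := Hb _ (inb _ _ si ti).
have inb2 : ball x eps (sig' *: b + (tau' *: a + x)).
  rewrite -ball_normE /ball_ /=.
  apply: (le_lt_trans (dist_bound b a x s sig' tau' si' ti')).
  rewrite [`|b| + _]addrC.
  rewrite /s -(ltr_pM2r K0) mulrAC divfK ?gt_eqF // ltr_pM2l //.
  by rewrite /K ltrDl.
have [_ H2] := Hb _ inb2.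
have E : F1 (sig *: a + (tau *: b + x)) = F2 (sig' *: b + (tau' *: a + x)).
  have e1 : s *: a + x + s *: b = s *: b + x + s *: a.
    by rewrite [s *: a + x]addrC -addrA [s *: a + s *: b]addrC addrA [x + s *: b]addrC.
  rewrite e1 [x + s *: b]addrC [s *: a + x]addrC in E2.
  have LE : s * (s * F1 (sig *: a + (tau *: b + x))) = s * (s * F2 (sig' *: b + (tau' *: a + x))).
    apply: (eq_trans (esym E1)); apply: (eq_trans _ E2).
    exact: (alg1 _ _ _ _).
  by move: LE => /(mulfI (lt0r_neq0 s0)) /(mulfI (lt0r_neq0 s0)).
have T := ler_normD (F1 x - F1 (sig *: a + (tau *: b + x))) (F1 (sig *: a + (tau *: b + x)) - F2 x).
have ee : F1 x - F1 (sig *: a + (tau *: b + x)) + (F1 (sig *: a + (tau *: b + x)) - F2 x) = F1 x - F2 x.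
  by rewrite addrA subrK.
rewrite ee in T.
rewrite -E distrC in H2.
case: (alg2 _ _ _ T H1 H2).
Qed.

Lemma Hess_sym (F G : V -> V) (h : V -> R) x : smooth h ->
  Hess F G h x = Hess G F h x.
Proof.
move=> sh; rewrite (Hess_sum F G h x sh) (Hess_sum G F h x sh).
have sd : forall j, smooth (fun y => derive h y (e j)) by move=> j; apply: smooth_derive.
transitivity (\sum_(j < n) \sum_(k < n) F x ord0 j * (G x ord0 k * derive (fun y => derive h y (e j)) x (e k))).
  by apply: eq_bigr => j _; rewrite Lie_sum // big_distrr.
transitivity (\sum_(k < n) \sum_(j < n) G x ord0 k * (F x ord0 j * derive (fun y => derive h y (e k)) x (e j))).
  rewrite exchange_big; apply: eq_bigr => k _; apply: eq_bigr => j _.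
  by rewrite (schwarz h (e k) (e j) x sh) mulrCA.
by apply: eq_bigr => k _; rewrite Lie_sum // big_distrr.
Qed.

Lemma Lie_lin (F G : V -> V) (u : R) (h : V -> R) x : smooth h ->
  Lie (fun y => F y + u *: G y) h x = Lie F h x + u * Lie G h x.
Proof.
move=> sh; have dh := smooth_diff h x sh.
by rewrite /Lie !deriveE // linearD linearZ.
Qed.

Lemma sum_expand (a b c d : 'I_n -> R) (u : R) :
  \sum_(j < n) (a j + u * b j) * (c j + u * d j) =
  \sum_(j < n) a j * c j + u * \sum_(j < n) a j * d j + u * \sum_(j < n) b j * c j
  + u ^+ 2 * \sum_(j < n) b j * d j.
Proof.
rewrite !big_distrr -!big_split; apply: eq_bigr => j _ /=; ring.
Qed.

Lemma Hess_lin (F1 G1 F2 G2 : V -> V) (u : R) (h : V -> R) x : smooth h ->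
  Hess (fun y => F1 y + u *: G1 y) (fun y => F2 y + u *: G2 y) h x =
  Hess F1 F2 h x + u * Hess F1 G2 h x + u * Hess G1 F2 h x + u ^+ 2 * Hess G1 G2 h x.
Proof.
move=> sh; rewrite !Hess_sum //.
rewrite -(sum_expand (fun j => F1 x ord0 j) (fun j => G1 x ord0 j)
   (fun j => Lie F2 (fun y => derive h y (e j)) x) (fun j => Lie G2 (fun y => derive h y (e j)) x) u).
apply: eq_bigr => j _.
rewrite Lie_lin; last exact: smooth_derive.
by rewrite !mxE.
Qed.

Lemma alg3 (Lf Lg Ll Lm Hll Hlm Hml Hmm u xi : R) : Hml = Hlm ->
  Lf + u * Lg + (Ll + u * Lm) * xi + 2^-1 * (Hll + u * Hlm + u * Hml + u ^+ 2 * Hmm)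
  = Lf + Ll * xi + 2^-1 * Hll + (Lg + Lm * xi + Hlm) * u + 2^-1 * Hmm * u ^+ 2.
Proof. move=> ->; rewrite !mulrDr !mulrDl; lra. Qed.

Lemma itoD_expand (f g l m : V -> V) (phi : V -> R) u xi x : smooth phi ->
  itoD f g l m phi u xi x =
    S f l phi xi x + A l m g phi xi x * u + 2^-1 * Hess m m phi x * u ^+ 2.
Proof.
move=> sp; unfold itoD, S, A; cbv zeta.
rewrite (Lie_lin f g u phi x sp) (Lie_lin l m u phi x sp) (Hess_lin l m l m u phi x sp).
apply: alg3; exact: Hess_sym.
Qed.

Lemma derive_coord (j : 'I_n) (a v : V) : derive (fun t : V => t ord0 j) a v = v ord0 j.
Proof.
have D : derivable (id : V -> V) a v by apply: derivable_id.
have := derive_mx D.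
rewrite derive_id => /(congr1 (fun A : V => A ord0 j)); rewrite mxE => ->.
by [].
Qed.

Lemma smooth_coord (j : 'I_n) : smooth (fun t : V => t ord0 j).
Proof.
case=> [|k] /=.
  by move=> x; apply: differentiable_continuous; apply: differentiable_coord.
split=> [x|v]; first exact: differentiable_coord.
apply: (Ck_ext (fun _ => v ord0 j)) => [x|]; first by rewrite derive_coord.
exact: Ck_cst.
Qed.

Lemma smooth_lin (c : 'I_n -> R) : smooth (fun x : V => \sum_(j < n) x ord0 j * c j).
Proof.
apply: smooth_sum => j; apply: smooth_mul; [exact: smooth_coord | exact: smooth_cst].
Qed.

Lemma grad_lin (c : 'I_n -> R) x : grad (fun x : V => \sum_(j < n) x ord0 j * c j) x = \row_j c j.
Proof.
apply/rowP => k; rewrite !mxE.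
have -> : (fun x : V => \sum_(j < n) x ord0 j * c j) = (fun x : V => \sum_(j < n) c j * (fun t : V => t ord0 j) x).
  by apply: funext => y; apply: eq_bigr => j _; rewrite mulrC.
rewrite derive_lincomb; last by move=> j; apply: differentiable_coord.
rewrite (bigD1 k) //= big1 ?addr0 => [|j njk].
  by rewrite derive_coord !mxE !eqxx mulr1.
by rewrite derive_coord !mxE eqxx /= (negbTE njk) mulr0.
Qed.

End S.

Lemma alg4 (R : realType) (Lf Lg Ll Lm Hll Hlm Hmm u xi : R) :
  Ll = 0 -> Lm = 0 -> Lg + Hlm = 0 -> Hmm = 0 ->
  Lf + Ll * xi + 2^-1 * Hll + (Lg + Lm * xi + Hlm) * u + 2^-1 * Hmm * u ^+ 2
  = Lf + 2^-1 * Hll.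
Proof.
move=> -> -> H ->; rewrite !mul0r !addr0 H mul0r addr0 mulr0 mul0r addr0 //.
Qed.

Theorem proposition2 (R : realType) (n r : nat)
  (f g l m : 'rV[R]_n -> 'rV[R]_n) (h : 'rV[R]_n -> R) (xbar : 'rV[R]_n) :
  smooth_vf f -> smooth_vf g -> smooth_vf l -> smooth_vf m -> smooth h ->
  stoch_rel_deg f g l m h r xbar ->
  row_free (\matrix_(i < r) grad (Siter f l i h) xbar) ->
  (r < n)%N ->
  exists phi : 'I_n -> ('rV[R]_n -> R),
    (forall i : 'I_n, (i < r)%N -> phi i = Siter f l i h) /\
    (forall i : 'I_n, smooth (phi i)) /\
    (\matrix_(i < n) grad (phi i) xbar) \in unitmx /\
    (\forall x \near xbar, forall u xi : R,
       (forall i : nat, (i.+1 < r)%N ->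
          itoD f g l m (Siter f l i h) u xi x = Siter f l i.+1 h x) /\
       itoD f g l m (Siter f l r.-1 h) u xi x =
         S f l (Siter f l r.-1 h) xi x
         + A l m g (Siter f l r.-1 h) xi x * u
         + 2^-1 * Hess m m (Siter f l r.-1 h) x * u ^+ 2 /\
       (forall j : 'I_n, (r <= j)%N ->
          itoD f g l m (phi j) u xi x =
            S f l (phi j) xi x + A l m g (phi j) xi x * u
            + 2^-1 * Hess m m (phi j) x * u ^+ 2)).
Proof.
move=> sf sg sl sm sh [r0 [ND [CD RD]]] fM rn.
pose M := \matrix_(i < r) grad (Siter f l i h) xbar.
pose C := (M^C)%MS.
pose phi := fun i : 'I_n => if (i < r)%N then Siter f l i h
  else (fun x : 'rV[R]_n => \sum_(j < n) x ord0 j * C i j).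
have sphi : forall i, smooth (phi i).
  move=> i; rewrite /phi; case: ifP => _; [exact: Siter_smooth | exact: smooth_lin].
exists phi; split; [|split; [exact: sphi|split]].
- by move=> i ir; rewrite /phi ir.
- apply: (@complete_unit _ r n M _ fM).
  + move=> i H; rewrite !rowK /phi H.
    by apply/rowP => j; rewrite !mxE.
  + move=> i ge; rewrite rowK /phi ltnNge ge /= grad_lin.
    by apply/rowP => j; rewrite !mxE.
have ALL : \forall x \near xbar, forall k, (k < r.-1)%N ->
    ((Lie l (Siter f l k h) x = 0 /\ Lie m (Siter f l k h) x = 0) /\
     (Lie g (Siter f l k h) x + Hess l m (Siter f l k h) x = 0 /\
       Lie m (Siter f l k h) x = 0 /\ Hess m m (Siter f l k h) x = 0)).
  apply: near_forall_lt => k kr.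
  have k2 : (k.+2 <= r)%N by rewrite -(prednK r0) ltnS.
  exact: (@filterS2 _ _ _ _ _ _ (fun x a b => conj a b) (ND k k2) (CD k k2)).
apply: filterS ALL => x Hx u xi; split; [|split].
- move=> i ir.
  have ir' : (i < r.-1)%N by rewrite -ltnS prednK.
  have [[H1 H2] [H3 [_ H4]]] := Hx i ir'.
  rewrite itoD_expand; last exact: Siter_smooth.
  rewrite /S /A /=.
  exact: alg4.
- by rewrite itoD_expand //; apply: Siter_smooth.
- by move=> j _; rewrite itoD_expand.
Qed.
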